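(* Let $X$ be an infinite set and $X\subseteq Y$. Then the map $\pi:S_\infty(Y)\to I(X)$, $\pi(f)=\widehat f$, is onto if and only if $|X|\le|Y\setminus X|$.
   Context: $S_\infty(Y)$ is the group of all bijections $Y\to Y$. $I(X)$ is the set of all bijections $f:A\to B$ with $A,B\subseteq X$ (including the empty map). For $f\in S_\infty(Y)$, $\widehat f=\{(x,f(x)): x\in X,\ f(x)\in X\}\in I(X)$, i.e. the restriction of $f$ to $X\cap f^{-1}(X)$. *)

(* Defs.v *)
From mathcomp Require Import all_boot.
From mathcomp Require Import boolp classical_sets cardinality.
Set Implicit Arguments. Unset Strict Implicit. Unset Printing Implicit Defensive.
Local Open Scope classical_set_scope.

(* An element of I(X): a partial bijection f : A -> B with A, B ⊆ X,
   represented by its graph R (a functional, injective relation whose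
   domain and range lie in X). *)
Definition partial_bij {Y : Type} (X : set Y) (R : Y -> Y -> Prop) : Prop :=
  (forall x y, R x y -> X x /\ X y) /\
  (forall x y1 y2, R x y1 -> R x y2 -> y1 = y2) /\
  (forall x1 x2 y, R x1 y -> R x2 y -> x1 = x2).

Definition fhat {Y : Type} (X : set Y) (f : Y -> Y) : Y -> Y -> Prop :=
  fun x y => X x /\ X (f x) /\ f x = y.

(* Main.v *)
Require Import Defs.
From mathcomp Require Import all_boot.
From mathcomp Require Import boolp classical_sets cardinality functions.
From Stdlib Require Import Lia.
From mathcomp Require Import zify.
Local Open Scope classical_set_scope.
Local Open Scope card_scope.

Lemma le_ex {T} {U : pointedType} (A : set T) (B : set U) :
  A #<= B <-> exists f : T -> U, set_fun A B f /\ set_inj A f.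
Proof.
split => [/pcard_leP/injfunPex [f ? ?]|[f [? ?]]]; first by exists f.
by apply/pcard_leP/injfunPex; exists f.
Qed.

Lemma hotel {T : pointedType} (Z : set T) : infinite_set Z ->
  exists (hz : T -> T) (hn : nat -> T),
   set_fun Z Z hz /\ set_inj Z hz /\ (forall n, Z (hn n)) /\ injective hn /\
   (forall z n, Z z -> hz z <> hn n).
Proof.
move=> /infiniteP; rewrite le_ex => -[e [eZ ei]].
have einj : injective e by move=> m n; apply: ei; rewrite in_setE.
pose hz z := if pselect (exists n, e n = z) is left _
  then e (2 * [get n : nat | e n = z])%N else z.
have hzE z (ex : exists n, e n = z) : hz z = e (2 * [get n : nat | e n = z])%N.
  by rewrite /hz; case: pselect.
have hzN z (ex : ~ exists n, e n = z) : hz z = z.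
  by rewrite /hz; case: pselect.
exists hz, (fun n => e (2 * n).+1).
split; [|split; [|split; [|split]]].
- move=> z Zz; have [ex|nex] := pselect (exists n, e n = z).
    by rewrite hzE //; apply: eZ.
  by rewrite hzN.
- move=> z1 z2; rewrite !in_setE => Z1 Z2.
  have [ex1|nex1] := pselect (exists n, e n = z1);
  have [ex2|nex2] := pselect (exists n, e n = z2).
  + rewrite hzE // hzE // => /einj H.
    have H' : [get n : nat | e n = z1] = [get n : nat | e n = z2] by lia.
    by rewrite -(getPex ex1) -(getPex ex2) H'.
  + by rewrite hzE // hzN // => H; case: nex2; eexists; exact: H.
  + by rewrite hzN // hzE // => H; case: nex1; eexists; exact: (esym H).
  + by rewrite !hzN.
- by move=> n; apply: eZ.
- by move=> m n /einj; lia.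
- move=> z n Zz; have [ex|nex] := pselect (exists n, e n = z).
    by rewrite hzE // => /einj; lia.
  by rewrite hzN // => H; apply: nex; exists (2 * n).+1.
Qed.

Definition goodG {T : Type} (Z : set T) (G : set ((T * bool) * T)) :=
  [/\ (forall a b y, G ((a,b),y) -> Z a),
      (forall p y1 y2, G (p,y1) -> G (p,y2) -> y1 = y2),
      (forall p1 p2 y, G (p1,y) -> G (p2,y) -> p1 = p2),
      (forall a b y, G ((a,b),y) -> exists y', G ((a, ~~ b), y')) &
      (forall p a, G (p,a) -> exists y, G ((a,true), y))].

Lemma zorn_step {T : pointedType} (Z : set T) :
  exists G, goodG Z G /\
    finite_set (Z `\` [set a | exists y, G ((a,true),y)]).
Proof.
have [G [gG Gmax]] : exists G, goodG Z G /\ forall B, G `<` B -> ~ goodG Z B.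
  apply: Zorn_bigcup => F FP Ftot; split.
  - by move=> a b y [X FX XG]; have [h _ _ _ _] := FP X FX; exact: h _ _ _ XG.
  - move=> p y1 y2 [X1 F1 X1G] [X2 F2 X2G].
    have [S12|S21] := Ftot _ _ F1 F2.
      by have [_ h _ _ _] := FP X2 F2; apply: h _ _ _ (S12 _ X1G) X2G.
    by have [_ h _ _ _] := FP X1 F1; apply: h _ _ _ X1G (S21 _ X2G).
  - move=> p1 p2 y [X1 F1 X1G] [X2 F2 X2G].
    have [S12|S21] := Ftot _ _ F1 F2.
      by have [_ _ h _ _] := FP X2 F2; apply: h _ _ _ (S12 _ X1G) X2G.
    by have [_ _ h _ _] := FP X1 F1; apply: h _ _ _ X1G (S21 _ X2G).
  - move=> a b y [X FX XG]; have [_ _ _ h _] := FP X FX.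
    by have [y' H] := h _ _ _ XG; exists y'; exists X.
  - move=> p a [X FX XG]; have [_ _ _ _ h] := FP X FX.
    by have [y' H] := h _ _ XG; exists y'; exists X.
exists G; split => //.
set S := [set a | _].
have [//|inf] := pselect (finite_set (Z `\` S)).
exfalso.
move: inf => /infiniteP; rewrite le_ex => -[e [eZ ei]].
have einj : injective e by move=> m n; apply: ei; rewrite in_setE.
have eS n : ~ S (e n) by have [] := eZ n I.
have eZ' n : Z (e n) by have [] := eZ n I.
have [gA gF gI gD gR] := gG.
have GS a b y : G ((a,b),y) -> S a.
  by case: b => H; [exists y | have [y' H'] := gD _ _ _ H; exists y'].
pose N := [set q : (T * bool) * T | exists n (b : bool), q = ((e n, b), e (2 * n + b)%N)].
apply: (Gmax (G `|` N)).
  split; first by move=> q Gq; left.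
  move=> /(_ ((e 0, true), e 1)) H.
  have : (G `|` N) ((e 0, true), e 1) by right; exists 0%N, true.
  by move=> /H /GS /eS.
split.
- move=> a b y [H|[n [b' E]]]; first exact: gA H.
  by case: E => -> _ _; apply: eZ'.
- move=> p y1 y2 [H1|[n1 [b1 E1]]] [H2|[n2 [b2 E2]]].
  + exact: gF H1 H2.
  + by case: E2 => E2 _; move: H1; rewrite E2 => /GS /eS.
  + by case: E1 => E1 _; move: H2; rewrite E1 => /GS /eS.
  + by move: E1 E2 => [-> ->] [/einj -> -> ->].
- move=> p1 p2 y [H1|[n1 [b1 E1]]] [H2|[n2 [b2 E2]]].
  + exact: gI H1 H2.
  + case: E2 => _ E2; have [y' /GS] := gR _ _ H1; by rewrite E2 => /eS.
  + case: E1 => _ E1; have [y' /GS] := gR _ _ H2; by rewrite E1 => /eS.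
  + move: E1 E2 => [-> ->] [-> /einj H].
    have [-> ->] : n1 = n2 /\ b1 = b2 by case: b1 b2 H => [] [] /= H; lia.
    by [].
- move=> a b y [H|[n [b' [-> -> _]]]].
    by have [y' H'] := gD _ _ _ H; exists y'; left.
  by exists (e (2 * n + ~~ b')%N); right; exists n, (~~ b').
- move=> p a [H|[n [b [_ ->]]]].
    by have [y' H'] := gR _ _ H; exists y'; left.
  by exists (e (2 * (2 * n + b)%N + true)%N); right; exists (2 * n + b)%N, true.
Qed.

Lemma absorb (T : pointedType) (Z : set T) : infinite_set Z ->
  exists k : T * bool -> T, (forall p, Z p.1 -> Z (k p)) /\
    (forall p q, Z p.1 -> Z q.1 -> k p = k q -> p = q).
Proof.
move=> Zinf.
have [hz [hn [hzZ [hzI [hnZ [hnI hzn]]]]]] := hotel _ Zinf.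
have [G [[gA gF gI gD gR] Fin]] := zorn_step Z.
set S := [set a | _] in Fin.
move: (finite_set_countable Fin); rewrite /countable le_ex => -[c [_ cI]].
pose phi p := [get y : T | G (p, y)].
have phiG a b : S a -> G ((a,b), phi (a,b)).
  move=> [y Hy]; apply: (getPex (P := fun y => G ((a, b), y))); case: b; first by exists y.
  by have [y' H'] := gD _ _ _ Hy; exists y'.
have phiS a b : S a -> S (phi (a,b)).
  by move=> Sa; have [y Hy] := gR _ _ (phiG a b Sa); exists y.
have SZ a : S a -> Z a by move=> [y Hy]; exact: gA Hy.
pose k (p : T * bool) := if pselect (S p.1) is left _ then hz (phi p)
  else hn (2 * c p.1 + p.2)%N.
have kS p : S p.1 -> k p = hz (phi p) by rewrite /k; case: pselect.
have kN p : ~ S p.1 -> k p = hn (2 * c p.1 + p.2)%N by rewrite /k; case: pselect.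
exists k; split.
  move=> [a b] /= Za; have [Sa|nSa] := pselect (S a).
    by rewrite kS //; apply: hzZ; apply: SZ; apply: phiS.
  by rewrite kN.
move=> [a1 b1] [a2 b2] /= Z1 Z2.
have [S1|nS1] := pselect (S a1); have [S2|nS2] := pselect (S a2).
- rewrite !kS // => E0.
  have E : phi (a1, b1) = phi (a2, b2).
    by apply: hzI E0; rewrite in_setE; apply: SZ; apply: phiS.
  by apply: (gI _ _ _ (phiG _ _ S1)); rewrite E; apply: phiG.
- by rewrite (kS (a1, b1)) // (kN (a2, b2)) // => E; exfalso; apply: (hzn _ _ _ E); apply: SZ; apply: phiS.
- by rewrite (kN (a1, b1)) // (kS (a2, b2)) // => E; exfalso; apply: (hzn _ _ _ (esym E)); apply: SZ; apply: phiS.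
- rewrite !kN // => /hnI /= H.
  have [Ec Eb] : c a1 = c a2 /\ b1 = b2 by case: b1 b2 H => [] [] /= H; lia.
  rewrite Eb; congr (_, _); apply: cI => //; rewrite in_setE //.
Qed.

Lemma main_pointed (T : pointedType) (X : set T) :
  infinite_set X ->
  ((forall R : T -> T -> Prop, partial_bij X R ->
      exists f : T -> T, bijective f /\ fhat X f = R)
   <-> (X #<= ~` X)).
Proof.
move=> Xinf; split.
  move=> H.
  have [|f [fb fE]] := H (fun _ _ => False).
    by split; [|split] => ? ? ?.
  apply/le_ex; exists f; split.
    move=> x Xx Xfx.
    have : fhat X f x (f x) by [].
    by rewrite fE.
  by move=> x y _ _; apply: bij_inj.
move=> /[dup] hle /le_ex [g [gZ gI]].
set Z := ~` X.
have Zinf : infinite_set Z.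
  by move=> fZ; apply: Xinf; apply: card_le_finite hle fZ.
have [k [kZ kI]] := absorb _ _ Zinf.
have : [set: T] #= Z.
  apply/card_eqPle; split; last exact: card_leT.
  apply/le_ex; exists (fun t => if pselect (X t) then k (g t, true) else k (t, false)).
  split.
    move=> t _; case: pselect => Xt; apply: kZ => //=.
    exact: gZ.
  move=> s t _ _; case: pselect => Xs; case: pselect => Xt.
  - move/kI => /(_ (gZ _ Xs) (gZ _ Xt)) [] E.
    by apply: gI => //; rewrite in_setE.
  - by move/kI => /(_ (gZ _ Xs) Xt) [].
  - by move/kI => /(_ Xs (gZ _ Xt)) [].
  - by move/kI => /(_ Xs Xt) [].
move=> /card_set_bijP [phi [phiZ phiI phiS]].
have phiZ' t : Z (phi t) by exact: phiZ.
have phiI' s t : phi s = phi t -> s = t by apply: phiI; rewrite in_setE.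
have phiS' z : Z z -> exists t, phi t = z.
  by move=> Zz; have [t _ E] := phiS z Zz; exists t.
move=> R [RX [Rf Ri]].
set A := [set x | exists y, R x y].
set B := [set y | exists x, R x y].
set T' := [set y | (X y /\ ~ B y) \/ (exists z, Z z /\ phi z = y) \/
                   (exists a, A a /\ phi a = y)].
have : Z #= T'.
  apply/card_eqPle; split; apply/le_ex; exists phi; split.
  - by move=> z Zz; right; left; exists z.
  - by move=> s t _ _; apply: phiI'.
  - by move=> y _; apply: phiZ'.
  - by move=> s t _ _; apply: phiI'.
move=> /card_set_bijP [psi [psiT psiI psiS]].
have psiI' z1 z2 : Z z1 -> Z z2 -> psi z1 = psi z2 -> z1 = z2.
  by move=> ? ?; apply: psiI; rewrite in_setE.
have psiS' y : T' y -> exists z, Z z /\ psi z = y.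
  by move=> Ty; have [z ? ?] := psiS y Ty; exists z.
pose r x := [get y : T | R x y].
have rR x : A x -> R x (r x).
  by move=> Ax; apply: (getPex (P := fun y => R x y)).
have AX x : A x -> X x by move=> [y /RX []].
pose f x := if pselect (A x) then r x else if pselect (X x) then phi x else psi x.
have fA x : A x -> f x = r x by rewrite /f; case: pselect.
have fX x : ~ A x -> X x -> f x = phi x by rewrite /f; do 2 case: pselect.
have fZ x : ~ X x -> f x = psi x.
  move=> nX; rewrite /f; destruct (pselect (A x)) as [Ax|nAx] => /=.
    by case: nX; apply: AX.
  by destruct (pselect (X x)).
have cls x : A x \/ (~ A x /\ X x) \/ ~ X x.
  have [Ax|nAx] := pselect (A x); first by left.
  by have [Xx|nXx] := pselect (X x); right; [left|right].
have fAB x : A x -> B (f x) /\ X (f x).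
  by move=> Ax; rewrite fA //; split; [exists x; apply: rR | exact: (RX _ _ (rR _ Ax)).2].
have fXZ x : ~ A x -> X x -> Z (f x) /\ ~ T' (f x).
  move=> nAx Xx; rewrite fX //; split; first exact: phiZ'.
  case=> [[Xp _]|[[z [Zz /phiI' E]]|[a [Aa /phiI' E]]]].
  - exact: phiZ' Xp.
  - by apply: Zz; rewrite E.
  - by apply: nAx; rewrite -E.
have fZT x : ~ X x -> T' (f x) by move=> nX; rewrite fZ //; apply: psiT.
have TB y : T' y -> B y -> False.
  move=> + [x Rxy]; have Xy := (RX _ _ Rxy).2.
  case=> [[_ nB]|[[z [_ E]]|[a [_ E]]]].
  - by apply: nB; exists x.
  - by apply: (phiZ' z); rewrite E.
  - by apply: (phiZ' a); rewrite E.
have fI x1 x2 : f x1 = f x2 -> x1 = x2.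
  move=> E.
  case: (cls x1) => [A1|[[nA1 X1]|nX1]]; case: (cls x2) => [A2|[[nA2 X2]|nX2]].
  - apply: (Ri _ _ (r x1)); first exact: rR.
    by rewrite -(fA _ A1) E fA //; apply: rR.
  - by have [_ H1] := fAB _ A1; have [H2 _] := fXZ _ nA2 X2; rewrite E in H1.
  - by have [H1 _] := fAB _ A1; exfalso; apply: (TB (f x1)) => //; rewrite E; apply: fZT.
  - by have [_ H1] := fAB _ A2; have [H2 _] := fXZ _ nA1 X1; rewrite E in H2.
  - by apply: phiI'; rewrite -fX // -fX // E.
  - by have [_ H] := fXZ _ nA1 X1; exfalso; apply: H; rewrite E; apply: fZT.
  - by have [H1 _] := fAB _ A2; exfalso; apply: (TB (f x2)) => //; rewrite -E; apply: fZT.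
  - by have [_ H] := fXZ _ nA2 X2; exfalso; apply: H; rewrite -E; apply: fZT.
  - by apply: psiI' => //; rewrite -fZ // -fZ // E.
have fS y : exists x, f x = y.
  have TS : T' y -> exists x, f x = y.
    by move=> /psiS' [z [Zz <-]]; exists z; apply: fZ.
  have [Xy|nXy] := pselect (X y).
    have [[x Rxy]|nB] := pselect (B y).
      exists x; have Ax : A x by exists y.
      by rewrite fA //; apply: Rf Rxy; apply: rR.
    by apply: TS; left.
  have [t Et] := phiS' y nXy.
  case: (cls t) => [At|[[nAt Xt]|nXt]].
  - by apply: TS; right; right; exists t.
  - by exists t; rewrite -Et; apply: fX.
  - by apply: TS; right; left; exists t.
exists f; split.
  exists (fun y => [get x : T | f x = y]).
    by move=> x; apply: fI; apply: (getPex (P := fun z => f z = f x)); exists x.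
  by move=> y; apply: (getPex (P := fun z => f z = y)).
apply: funext => x; apply: funext => y; apply: propext; split.
  case=> Xx [Xfx <-].
  case: (cls x) => [Ax|[[nAx _]|//]]; first by rewrite fA //; apply: rR.
  by have [Zf _] := fXZ _ nAx Xx; case: Zf.
move=> Rxy; have [Xx Xy] := RX _ _ Rxy; have Ax : A x by exists y.
split => //; rewrite fA //; have -> : r x = y by apply: Rf Rxy; apply: rR.
by [].
Qed.

Theorem proposition6p1 (Y : Type) (X : set Y) :
  infinite_set X ->
  ((forall R : Y -> Y -> Prop, partial_bij X R ->
      exists f : Y -> Y, bijective f /\ fhat X f = R)
   <-> (X #<= ~` X)).
Proof.
move: X; elim/Ppointed: Y => [Y X Xinf|Y X]; last exact: main_pointed.
exfalso; apply: Xinf; rewrite (empty_eq0 X); exact: finite_set0.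
Qed.
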